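(* Let $\{i,j,k\}=\{1,2,3\}$, let $S$ be a word directed toward $i$ and $T$ a word directed toward $j$ (with $i\neq j$). Then, up to applications of rule (8), the word $S^{-1}T$ has at most one factorization under the local algorithm $A$, and it is of the form $T_1S_1^{-1}$, where $S_1$ is directed toward $i$ and $T_1$ is directed toward $j$.
   Context: For distinct $a,b\in\{1,2,3\}$, $E_{ab}$ denotes the $3\times 3$ elementary matrix that differs from the identity by an entry $1$ at position $(a,b)$, and $E_{ab}^{-1}$ its inverse; for a permutation $(a,b,c)$ of $(1,2,3)$, $R_{abc}$ denotes the symbol of the cyclic permutation $r$ of indices with $c\mapsto b\mapsto a\mapsto c$. For a word $S=X_1\cdots X_n$ of letters $E_{ab}$, $S^{-1}=X_n^{-1}\cdots X_1^{-1}$. A word is directed toward $i$ if it consists only of letters $E_{ij}$ and $E_{ik}$ ($\{i,j,k\}=\{1,2,3\}$). Local algorithm $A$ acts on finite words by repeatedly replacing subwords by the rules (for $\{i,j,k\}=\{1,2,3\}$): (1) $E^{-1}_{ij}E_{ji}\Rightarrow$ stop; (2) $E^{-1}_{ij}E_{ij}\Rightarrow 1$; (3) $E^{-1}_{ij}E_{kj}\Rightarrow E_{kj}E^{-1}_{ij}$; (4) $E^{-1}_{ij}E_{jk}\Rightarrow E_{jk}E^{-1}_{ik}E^{-1}_{ij}$; (5) $E^{-1}_{ij}E_{ki}\Rightarrow E_{ki}E_{kj}E^{-1}_{ij}$; (6a) $E^{-1}_{ij}E_{ik}\Rightarrow E_{ik}E^{-1}_{ij}$ or alternatively (6b) $E^{-1}_{ij}E_{ik}\Rightarrow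 E_{ki}E_{jk}R_{kji}E^{-1}_{kj}E^{-1}_{ji}$; (7) $R_{kji}E_{lm}^{\pm1}\Rightarrow E_{r(l)r(m)}^{\pm1}R_{kji}$ with $r:i\mapsto j\mapsto k\mapsto i$. In addition the rule (8) $E_{ij}E_{ik}\Rightarrow E_{ik}E_{ij}$ may be used. Permutation symbols can be moved using rule (7). The order of places at which rules are applied is fixed; the only choices are between (6a) and (6b). A factorization of a word $W$ is the final word of a run of the algorithm on $W$ that terminates without applying rule (1), i.e. ends with a word $T'S'^{-1}$ where $T'$ contains no inverse letters and $S'$ consists of letters $E_{ab}$. *)

(* Defs.v *)
From Stdlib Require Import List Relations.
Import ListNotations.

Inductive idx : Type := i1 | i2 | i3.

Definition idx_eqb (x y : idx) : bool :=
  match x, y with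
  | i1, i1 | i2, i2 | i3, i3 => true
  | _, _ => false
  end.

(* E a b = E_ab ; Einv a b = E_ab^{-1} ; R a b c = R_abc, the symbol of the
   cyclic permutation c |-> b |-> a |-> c. *)
Inductive letter : Type :=
| E (a b : idx)
| Einv (a b : idx)
| R (a b c : idx).

Definition word := list letter.

Definition inv_letter (x : letter) : letter :=
  match x with
  | E a b => Einv a b
  | Einv a b => E a b
  | R a b c => R a b c
  end.
Definition inv_word (S : word) : word := rev (map inv_letter S).

(* the permutation r : i |-> j |-> k |-> i attached to R_kji *)
Definition cyc (k j i : idx) (x : idx) : idx :=
  if idx_eqb x i then j else if idx_eqb x j then k else i.

Definition distinct3 (i j k : idx) : Prop := i <> j /\ i <> k /\ j <> k.

(* Rules (2)-(7) of the local algorithm A (rule (1) = "stop" has no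
   rewriting step), and rule (8). Each rule replaces a two-letter subword. *)
Inductive rule_A : word -> word -> Prop :=
| rule2 i j k : distinct3 i j k ->
    rule_A [Einv i j; E i j] []
| rule3 i j k : distinct3 i j k ->
    rule_A [Einv i j; E k j] [E k j; Einv i j]
| rule4 i j k : distinct3 i j k ->
    rule_A [Einv i j; E j k] [E j k; Einv i k; Einv i j]
| rule5 i j k : distinct3 i j k ->
    rule_A [Einv i j; E k i] [E k i; E k j; Einv i j]
| rule6a i j k : distinct3 i j k ->
    rule_A [Einv i j; E i k] [E i k; Einv i j]
| rule6b i j k : distinct3 i j k ->
    rule_A [Einv i j; E i k] [E k i; E j k; R k j i; Einv k j; Einv j i]
| rule7E i j k l m : distinct3 i j k -> l <> m ->
    rule_A [R k j i; E l m] [E (cyc k j i l) (cyc k j i m); R k j i]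
| rule7Einv i j k l m : distinct3 i j k -> l <> m ->
    rule_A [R k j i; Einv l m] [Einv (cyc k j i l) (cyc k j i m); R k j i].

Inductive rule_8 : word -> word -> Prop :=
| rule8 i j k : distinct3 i j k ->
    rule_8 [E i j; E i k] [E i k; E i j].

Definition at_subword (r : word -> word -> Prop) (w w' : word) : Prop :=
  exists u v l l', r l l' /\ w = u ++ l ++ v /\ w' = u ++ l' ++ v.

Definition A_step (w w' : word) : Prop :=
  at_subword rule_A w w' \/ at_subword rule_8 w w'.

(* runs of A that never apply the stopping rule (1) *)
Definition A_reach : word -> word -> Prop := clos_refl_trans word A_step.

Definition equiv8 : word -> word -> Prop :=
  clos_refl_sym_trans word (at_subword rule_8).

Definition is_E (x : letter) : Prop := exists a b, x = E a b.
Definition not_inverse (x : letter) : Prop := forall a b, x <> Einv a b.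

Definition factorization (W F : word) : Prop :=
  A_reach W F /\
  exists T' S', F = T' ++ inv_word S' /\ Forall not_inverse T' /\ Forall is_E S'.

Definition directed (i : idx) (w : word) : Prop :=
  Forall (fun x => exists j, j <> i /\ x = E i j) w.

(* Main.v *)
Require Import Defs.
From Stdlib Require Import List Relations Lia Bool Arith.
Import ListNotations.

Lemma idx_eqb_spec x y : idx_eqb x y = true <-> x = y.
Proof. destruct x, y; simpl; split; congruence. Qed.
Lemma idx_eqb_refl x : idx_eqb x x = true.
Proof. destruct x; reflexivity. Qed.
Lemma idx_eqb_neq x y : x <> y -> idx_eqb x y = false.
Proof. destruct x, y; simpl; congruence. Qed.

Definition third (i j : idx) : idx :=
  match i, j with
  | i1, i2 | i2, i1 => i3
  | i1, i3 | i3, i1 => i2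
  | _, _ => i1
  end.

Definition alph (i j : idx) (x : letter) : bool :=
  match x with
  | E a b => idx_eqb a j && negb (idx_eqb b j)
  | Einv a b => idx_eqb a i && negb (idx_eqb b i)
  | R _ _ _ => false
  end.

Definition subst (i j : idx) (l : list idx) : list idx :=
  flat_map (fun y => if idx_eqb y j then [third i j; y] else [y]) l.
Arguments subst : simpl never.

Definition sstep (i j : idx) (s : option (nat * nat * list idx)) (x : letter)
  : option (nat * nat * list idx) :=
  match s with
  | None => None
  | Some (cp, cq, blk) =>
    match x with
    | Einv _ y => Some (cp, cq, blk ++ [y])
    | E _ y => if idx_eqb y i then
                 (if existsb (idx_eqb j) blk then None
                  else Some (S cp, cq + length blk, blk))
               else Some (cp, S cq, subst i j blk)
    | R _ _ _ => None
    end
  end.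

Lemma subst_app i j l1 l2 : subst i j (l1 ++ l2) = subst i j l1 ++ subst i j l2.
Proof. unfold subst; apply flat_map_app. Qed.
Lemma subst_nil i j : subst i j [] = [].
Proof. reflexivity. Qed.
Lemma subst_one i j y : subst i j [y] = if idx_eqb y j then [third i j; y] else [y].
Proof. unfold subst; simpl; destruct (idx_eqb y j); reflexivity. Qed.
Lemma subst_id i j l : existsb (idx_eqb j) l = false -> subst i j l = l.
Proof.
  induction l as [|y l IH]; [reflexivity|]. simpl. intros H.
  apply orb_false_iff in H as [H1 H2].
  change (y :: l) with ([y] ++ l). rewrite subst_app, subst_one, IH by exact H2.
  destruct (idx_eqb y j) eqn:E1; [|reflexivity].
  apply idx_eqb_spec in E1; subst; rewrite idx_eqb_refl in H1; discriminate.
Qed.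
Lemma existsb_subst i j l : i <> j ->
  existsb (idx_eqb j) (subst i j l) = existsb (idx_eqb j) l.
Proof.
  intros Hij. induction l as [|y l IH]; [reflexivity|].
  change (y :: l) with ([y] ++ l). rewrite subst_app, !existsb_app, IH, subst_one.
  destruct (idx_eqb y j) eqn:E1; simpl.
  - apply idx_eqb_spec in E1; subst. rewrite idx_eqb_refl.
    destruct i, j; simpl; congruence.
  - reflexivity.
Qed.

Ltac rw := rewrite ?subst_app, ?existsb_app, ?length_app, ?subst_one; simpl;
  rewrite ?existsb_subst by discriminate; rewrite <- ?app_assoc; simpl.
Ltac solve_fold :=
  simpl; rw;
  try reflexivity;
  let Hb := fresh in
  destruct (existsb _ _) eqn:Hb; simpl; rw;
  [ try reflexivity | rewrite ?(subst_id _ _ _ Hb); rw; try rewrite Hb; simpl; rw; try (repeat f_equal; lia) ].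

Lemma rule_ok i j (Hij : i <> j) l l' :
  (rule_A l l' \/ rule_8 l l') -> forallb (alph i j) l = true ->
  forallb (alph i j) l' = true /\
  forall s, fold_left (sstep i j) l s = fold_left (sstep i j) l' s.
Proof.
  intros H;
  destruct H as [[a b c d|a b c d|a b c d|a b c d|a b c d|a b c d|a b c lx m d e|a b c lx m d e]|[a b c d]];
  intros Ha;
  try (simpl in Ha; rewrite ?andb_false_r in Ha; discriminate);
  destruct d as [d1 [d2 d3]];
  destruct i, j; try congruence; destruct a, b, c; try congruence;
  simpl in Ha; try discriminate; (split; [reflexivity|]);
  intros [[[cp cq] blk]|]; simpl; try reflexivity; try solve_fold.
Qed.

Lemma step_ok i j (Hij : i <> j) w w' : A_step w w' ->
  forallb (alph i j) w = true ->
  forallb (alph i j) w' = true /\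
  forall s, fold_left (sstep i j) w s = fold_left (sstep i j) w' s.
Proof.
  intros [H|H]; destruct H as (u & v & l & l' & Hr & -> & ->); intros Ha;
  rewrite !forallb_app in *;
  apply andb_prop in Ha as [Hu Ha]; apply andb_prop in Ha as [Hl Hv];
  (destruct (rule_ok i j Hij l l') as [Hl' Hf]; [tauto|exact Hl|]);
  (split; [rewrite Hu, Hl', Hv; reflexivity|]);
  intros s; rewrite !fold_left_app, Hf; reflexivity.
Qed.

Lemma reach_ok i j (Hij : i <> j) w w' : A_reach w w' ->
  forallb (alph i j) w = true ->
  forallb (alph i j) w' = true /\
  forall s, fold_left (sstep i j) w s = fold_left (sstep i j) w' s.
Proof.
  induction 1 as [x y H|x|x y z H1 IH1 H2 IH2].
  - apply step_ok; assumption.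
  - auto.
  - intros Ha. destruct (IH1 Ha) as [Hy F1]. destruct (IH2 Hy) as [Hz F2].
    split; [exact Hz|]. intros s; rewrite F1, F2; reflexivity.
Qed.

Lemma equiv8_cong u v w w' : equiv8 w w' -> equiv8 (u ++ w ++ v) (u ++ w' ++ v).
Proof.
  induction 1 as [x y H|x|x y H IH|x y z H1 IH1 H2 IH2].
  - apply rst_step. destruct H as (u0 & v0 & l & l' & Hr & -> & ->).
    exists (u ++ u0), (v0 ++ v), l, l'. split; [exact Hr|].
    split; rewrite <- !app_assoc; reflexivity.
  - apply rst_refl.
  - apply rst_sym; exact IH.
  - eapply rst_trans; eauto.
Qed.

Fixpoint np (i : idx) (T : word) : nat :=
  match T with
  | [] => 0
  | x :: T => (match x with E _ y => if idx_eqb y i then 1 else 0 | _ => 0 end) + np i T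
  end.
Fixpoint nq (i : idx) (T : word) : nat :=
  match T with
  | [] => 0
  | x :: T => (match x with E _ y => if idx_eqb y i then 0 else 1 | _ => 0 end) + nq i T
  end.

Lemma move_q i j (Hij : i <> j) m Z :
  equiv8 (E j (third i j) :: repeat (E j i) m ++ Z) (repeat (E j i) m ++ E j (third i j) :: Z).
Proof.
  induction m as [|m IH]; simpl; [apply rst_refl|].
  eapply rst_trans.
  - apply rst_step. exists [], (repeat (E j i) m ++ Z), [E j (third i j); E j i], [E j i; E j (third i j)].
    split; [|split; reflexivity].
    apply rule8. destruct i, j; try congruence; repeat split; discriminate.
  - apply (equiv8_cong [E j i] [] _ _) in IH. simpl in IH. rewrite !app_nil_r in IH. exact IH.
Qed.

Lemma third_eq i j y : i <> j -> y <> i -> y <> j -> y = third i j.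
Proof. destruct i, j, y; simpl; congruence. Qed.

Lemma sort_T i j (Hij : i <> j) T : directed j T ->
  equiv8 T (repeat (E j i) (np i T) ++ repeat (E j (third i j)) (nq i T)).
Proof.
  induction 1 as [|x T [y [Hy ->]] HT IH]; simpl; [apply rst_refl|].
  apply (equiv8_cong [E j y] [] _ _) in IH. simpl in IH. rewrite !app_nil_r in IH.
  eapply rst_trans; [exact IH|].
  destruct (idx_eqb y i) eqn:Ey.
  - apply idx_eqb_spec in Ey; subst. simpl. apply rst_refl.
  - simpl. assert (y = third i j) as ->.
    { apply third_eq; auto. intro; subst; rewrite idx_eqb_refl in Ey; discriminate. }
    apply move_q; exact Hij.
Qed.

Lemma fold_T i j (Hij : i <> j) T : directed j T -> forall c d,
  fold_left (sstep i j) T (Some (c, d, [])) = Some (c + np i T, d + nq i T, []).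
Proof.
  induction 1 as [|x T [y [Hy ->]] HT IH]; intros c d; simpl.
  - repeat f_equal; lia.
  - destruct (idx_eqb y i); simpl; rewrite IH; f_equal; f_equal; f_equal; lia.
Qed.

Definition sec (X : word) : list idx :=
  map (fun x => match x with Einv _ y => y | _ => i1 end) X.

Lemma fold_X i j X : Forall (fun x => exists y, x = Einv i y) X -> forall c d bl,
  fold_left (sstep i j) X (Some (c, d, bl)) = Some (c, d, bl ++ sec X).
Proof.
  induction 1 as [|x X [y ->] HX IH]; intros c d bl; simpl.
  - rewrite app_nil_r; reflexivity.
  - rewrite IH, <- app_assoc; reflexivity.
Qed.

Lemma sec_inj i X1 X2 : Forall (fun x => exists y, x = Einv i y) X1 ->
  Forall (fun x => exists y, x = Einv i y) X2 -> sec X1 = sec X2 -> X1 = X2.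
Proof.
  intros H1; revert X2; induction H1 as [|x X [y ->] HX IH]; intros X2 H2 Hs;
  destruct H2 as [|x' X' [y' ->] HX']; simpl in *; try discriminate; auto.
  injection Hs as -> Hs. f_equal; auto.
Qed.

Lemma init_alph i j (Hij : i <> j) S T : directed i S -> directed j T ->
  forallb (alph i j) (inv_word S ++ T) = true.
Proof.
  intros HS HT. apply forallb_forall. intros x Hx. apply in_app_or in Hx as [Hx|Hx].
  - unfold inv_word in Hx. apply in_rev in Hx. apply in_map_iff in Hx as [z [<- Hz]].
    unfold directed in HS; rewrite Forall_forall in HS. destruct (HS z Hz) as [y [Hy ->]]. simpl.
    rewrite idx_eqb_refl, idx_eqb_neq by exact Hy. reflexivity.
  - unfold directed in HT; rewrite Forall_forall in HT. destruct (HT x Hx) as [y [Hy ->]]. simpl.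
    rewrite idx_eqb_refl, idx_eqb_neq by exact Hy. reflexivity.
Qed.

Lemma final_shape i j T' S' :
  forallb (alph i j) (T' ++ inv_word S') = true ->
  Forall not_inverse T' -> Forall is_E S' ->
  directed j T' /\ Forall (fun x => exists y, x = Einv i y) (inv_word S') /\ directed i S'.
Proof.
  intros Ha HT HS. rewrite forallb_app in Ha. apply andb_prop in Ha as [H1 H2].
  rewrite forallb_forall in H1, H2. rewrite Forall_forall in HT, HS.
  split; [|split].
  - apply Forall_forall. intros x Hx. specialize (H1 x Hx). specialize (HT x Hx).
    destruct x as [a b|a b|a b c]; simpl in H1; try discriminate.
    + apply andb_prop in H1 as [Ha Hb]. apply idx_eqb_spec in Ha; subst.
      exists b; split; [|reflexivity]. intro; subst; rewrite idx_eqb_refl in Hb; discriminate.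
    + exfalso; apply (HT a b); reflexivity.
  - apply Forall_forall. intros x Hx. specialize (H2 x Hx).
    unfold inv_word in Hx. apply in_rev in Hx. apply in_map_iff in Hx as [z [<- Hz]].
    destruct (HS z Hz) as [a [b ->]]. simpl in H2. apply andb_prop in H2 as [Ha _].
    apply idx_eqb_spec in Ha; subst. exists b; reflexivity.
  - apply Forall_forall. intros z Hz. destruct (HS z Hz) as [a [b ->]].
    assert (Hin : In (Einv a b) (inv_word S')).
    { unfold inv_word. rewrite <- in_rev. apply in_map_iff. exists (E a b); auto. }
    specialize (H2 _ Hin). simpl in H2. apply andb_prop in H2 as [Ha Hb].
    apply idx_eqb_spec in Ha; subst. exists b; split; [|reflexivity].
    intro; subst; rewrite idx_eqb_refl in Hb; discriminate.
Qed.

Theorem proposition3p1 (i j : idx) (Hij : i <> j) (S T : word)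
  (HS : directed i S) (HT : directed j T) :
  (forall F1 F2, factorization (inv_word S ++ T) F1 ->
     factorization (inv_word S ++ T) F2 -> equiv8 F1 F2) /\
  (forall F, factorization (inv_word S ++ T) F ->
     exists T1 S1, F = T1 ++ inv_word S1 /\ directed j T1 /\ directed i S1).
Proof.
  pose proof (init_alph i j Hij S T HS HT) as H0.
  split.
  - intros F1 F2 [R1 (T1 & S1 & -> & N1 & E1)] [R2 (T2 & S2 & -> & N2 & E2)].
    destruct (reach_ok i j Hij _ _ R1 H0) as [A1 G1].
    destruct (reach_ok i j Hij _ _ R2 H0) as [A2 G2].
    destruct (final_shape i j _ _ A1 N1 E1) as (D1 & X1 & _).
    destruct (final_shape i j _ _ A2 N2 E2) as (D2 & X2 & _).
    assert (Heq := eq_trans (eq_sym (G1 (Some (0, 0, [])))) (G2 (Some (0, 0, [])))).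
    rewrite !fold_left_app, (fold_T i j Hij T1 D1), (fold_T i j Hij T2 D2),
      (fold_X i j _ X1), (fold_X i j _ X2) in Heq.
    simpl in Heq. injection Heq as Hp Hq Hs.
    assert (Hx : inv_word S1 = inv_word S2) by (eapply sec_inj; eauto).
    rewrite Hx.
    apply (equiv8_cong [] (inv_word S2) T1 T2).
    eapply rst_trans; [apply (sort_T i j Hij _ D1)|].
    rewrite Hp, Hq. apply rst_sym. apply (sort_T i j Hij _ D2).
  - intros F [R1 (T1 & S1 & -> & N1 & E1)].
    destruct (reach_ok i j Hij _ _ R1 H0) as [A1 _].
    destruct (final_shape i j _ _ A1 N1 E1) as (D1 & _ & D2).
    exists T1, S1; auto.
Qed.
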